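(* Let $m,p,n$ be positive integers with $p\mid m$, and let $g\in G(m,p,n)$ be $p$-connected and not a diagonal reflection. Then there exists a reflection $s\in G(m,p,n)$ with $s\le_\perp g$ if and only if $\operatorname{codim}(g)=2$ and the non-1 eigenvalues of $g$ are $\zeta_m^{c}$ and $\zeta_m^{-c}$ for some integer $c$.
   Context: $\zeta_m=e^{2\pi i/m}$. $G(m,1,n)$ is the group of $n\times n$ monomial matrices whose nonzero entries are $m$-th roots of unity, acting on $V=\mathbb{C}^n$; for $p\mid m$, $G(m,p,n)$ is the subgroup of elements whose nonzero entries multiply to an $(m/p)$-th root of unity. A reflection is an element of finite order fixing a hyperplane pointwise; a diagonal reflection is a diagonal matrix that is a reflection. $\operatorname{codim}(g)=n-\dim\{v\in V:gv=v\}$, and the codimension order is $a\le_\perp c$ iff $\operatorname{codim}(a)+\operatorname{codim}(a^{-1}c)=\operatorname{codim}(c)$. A diagonal matrix $g\ne 1$ whose non-1 eigenvalues (with multiplicity) are $\zeta_m^{c_1},\dots,\zeta_m^{c_k}$ is $p$-connected if $p\mid c_1+\dots+c_k$ but $p\nmid\sum_{i\in I}c_i$ for every nonempty proper subset $I\subsetneq\{1,\dots,k\}$. *)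

(* Defs.v *)
From mathcomp Require Import all_boot all_algebra.
From mathcomp Require Import reals trigo complex.
Import GRing.Theory Num.Theory.
Set Implicit Arguments. Unset Strict Implicit. Unset Printing Implicit Defensive.
Local Open Scope ring_scope.
Local Open Scope complex_scope.

Section Defs.
Variable R : realType.
Local Notation C := R[i].

Definition zeta (m : nat) : C :=
  (cos (2 * pi / m%:R))%:C + 'i * (sin (2 * pi / m%:R))%:C.

Variable n : nat.

Definition monomial (g : 'M[C]_n) : Prop :=
  (forall i, #|[set j | g i j != 0]| = 1%N) /\
  (forall j, #|[set i | g i j != 0]| = 1%N).

Definition inGm1n (m : nat) (g : 'M[C]_n) : Prop :=
  monomial g /\ (forall i j, g i j != 0 -> g i j ^+ m = 1).

Definition inGmpn (m p : nat) (g : 'M[C]_n) : Prop :=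
  inGm1n m g /\
  (\prod_(i < n) \prod_(j < n | g i j != 0) g i j) ^+ (m %/ p) = 1.

(* fixed space {v in V : g v = v} (as the row space of a matrix whose rows
   are the transposed fixed column vectors) *)
Definition fixspace (g : 'M[C]_n) : 'M[C]_n := kermx (g - 1%:M)^T.

Definition codim (g : 'M[C]_n) : nat := (n - \rank (fixspace g))%N.

Definition finite_order (g : 'M[C]_n) : Prop :=
  exists k : nat, (0 < k)%N /\ iter k (mulmx g) 1%:M = 1%:M.

Definition reflection (g : 'M[C]_n) : Prop :=
  finite_order g /\ g != 1%:M /\
  exists H : 'M[C]_n, \rank H = n.-1 /\ (H <= fixspace g)%MS.

Definition diag_reflection (g : 'M[C]_n) : Prop :=
  is_diag_mx g /\ reflection g.

Definition le_perp (a c : 'M[C]_n) : Prop :=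
  (codim a + codim (invmx a *m c))%N = codim c.

Definition p_connected (m p : nat) (g : 'M[C]_n) : Prop :=
  is_diag_mx g /\ g != 1%:M /\
  exists c : 'I_n -> int,
    (forall i, g i i = zeta m ^ c i) /\
    let S := [set i | g i i != 1] in
    (p%:Z %| \sum_(i in S) c i)%Z /\
    (forall I : {set 'I_n}, I != set0 -> I \proper S ->
        ~~ (p%:Z %| \sum_(i in I) c i)%Z).
End Defs.

(* Main.v *)
Require Import Defs.
From mathcomp Require Import all_boot all_algebra.
From mathcomp Require Import reals trigo complex.
From mathcomp Require Import all_order perm zify ring.
Import Order.TTheory GRing.Theory Num.Theory.
Set Implicit Arguments. Unset Strict Implicit. Unset Printing Implicit Defensive.
Local Open Scope ring_scope.

Section Z.
Local Open Scope complex_scope.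
Variable R : realType.
Definition ex (t : R) : R[i] := (cos t)%:C + 'i * (sin t)%:C.
Lemma exE t : ex t = Complex (cos t) (sin t).
Proof. rewrite /ex; simpc. by []. Qed.
Lemma exD s t : ex s * ex t = ex (s + t).
Proof. rewrite !exE cosD sinD; simpc. by rewrite [X in _ +i* X]addrC. Qed.
Lemma ex0 : ex 0 = 1.
Proof. by rewrite exE cos0 sin0. Qed.
Lemma exX t k : ex t ^+ k = ex (t *+ k).
Proof. elim: k => [|k IH]; first by rewrite expr0 mulr0n ex0.
by rewrite exprS IH exD mulrS. Qed.

Variable m : nat.
Hypothesis m0 : (0 < m)%N.

Lemma zetaX k : zeta R m ^+ k = ex ((2 * pi / m%:R) *+ k).
Proof. exact: exX. Qed.

Lemma zeta_m : zeta R m ^+ m = 1.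
Proof.
rewrite zetaX -mulr_natr mulfVK ?pnatr_eq0 -?lt0n // exE.
by rewrite mulr_natl cos2pi sin2pi.
Qed.

Lemma zeta_neq0 : zeta R m != 0.
Proof.
apply/eqP=> z0; have := zeta_m; rewrite z0 expr0n.
by case: m m0 => // k _ /= /eqP; rewrite eq_sym oner_eq0.
Qed.

Lemma zeta_unit : zeta R m \is a GRing.unit.
Proof. by rewrite unitfE zeta_neq0. Qed.

Lemma zeta_eq1_nat k : zeta R m ^+ k = 1 -> (m %| k)%N.
Proof.
rewrite {1}(divn_eq k m) exprD mulnC exprM zeta_m expr1n mul1r.
have : (k %% m < m)%N by rewrite ltn_mod.
rewrite /dvdn; move: (k %% m)%N => r rm.
have [->|r0] := eqVneq r 0%N; first by [].
rewrite zetaX exE => -[c1 s0]; exfalso.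
set t := (2 * pi / m%:R) *+ r in c1 s0.
have mpos : (0 : R) < m%:R by rewrite ltr0n.
have t0 : 0 < t.
  rewrite /t -mulr_natr mulr_gt0 ?ltr0n ?lt0n //.
  by rewrite divr_gt0 // mulr_gt0 // pi_gt0.
have t2 : t < pi *+ 2.
  rewrite /t -mulr_natr mulrAC ltr_pdivrMr // -[pi *+ 2]mulr_natl.
  by rewrite ltr_pM2l ?ltr_nat // mulr_gt0 ?pi_gt0.
have [tp|tp|tp] := ltrgtP t pi.
- by have := @sin_gt0_pi _ t; rewrite t0 tp s0 ltxx => /(_ isT).
- have : sin ((t - pi) + pi) < 0.
    rewrite sinDpi oppr_lt0 sin_gt0_pi // subr_gt0 tp /= ltrBlDr.
    by rewrite -mulr2n.
  by rewrite subrK s0 ltxx.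
- by move: c1; rewrite tp cospi => /eqP; rewrite eq_sym -addr_eq0 -mulr2n pnatr_eq0.
Qed.

Lemma zeta_eq1 (c : int) : zeta R m ^ c = 1 -> ((m : int) %| c)%Z.
Proof.
case: c => k.
  by move=> /zeta_eq1_nat; rewrite dvdzE.
move=> h; rewrite dvdzE /=; apply: zeta_eq1_nat.
by move: h; rewrite NegzE -exprz_inv exprz_inv => /eqP; rewrite invr_eq1 => /eqP.
Qed.
End Z.


Section H.
Variable F : fieldType.

Lemma rank1_minor m n (A : 'M[F]_(m, n)) : (\rank A <= 1)%N ->
  forall i j k l, A i k * A j l = A i l * A j k.
Proof.
move=> hr i j k l; rewrite -(mulmx_base A).
move: (col_base A) (row_base A) hr; case: (\rank A) => [|[|r]] // cb rb _.
  by rewrite !mxE !big_ord0 !mul0r.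
rewrite !mxE !big_ord1; ring.
Qed.

Lemma rank2_minor m n (A : 'M[F]_(m, n)) i j k l :
  A i k * A j l != A i l * A j k -> (1 < \rank A)%N.
Proof.
move=> h; rewrite ltnNge; apply/negP => hr; move/eqP: h; apply.
exact: rank1_minor.
Qed.

Lemma rank_outer m n (u : 'I_m -> F) (w : 'I_n -> F) :
  (\rank (\matrix_(i < m, j < n) (u i * w j)%R) <= 1)%N.
Proof.
have -> : \matrix_(i < m, j < n) (u i * w j) = (\col_i u i) *m (\row_j w j).
  by apply/matrixP => i j; rewrite !mxE big_ord1 !mxE.
by apply: leq_trans (mxrankM_maxl _ _) (rank_leq_col _).
Qed.

Lemma mul_single m n p (A : 'M[F]_(m, n)) (v : 'M[F]_(n, p)) k j c :
  (forall l, l != j -> A k l = 0) -> (A *m v) k c = A k j * v j c.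
Proof.
move=> hA; rewrite mxE (bigD1 j) //= big1 ?addr0 // => l lj.
by rewrite hA ?mul0r.
Qed.
End H.

Lemma codimE (R : realType) n (g : 'M[R[i]]_n) : codim g = \rank (g - 1%:M).
Proof.
by rewrite /codim /fixspace mxrank_ker mxrank_tr subKn // rank_leq_row.
Qed.

Lemma monorow (R : realType) n (s : 'M[R[i]]_n) : monomial s ->
  forall i j j', s i j != 0 -> s i j' != 0 -> j = j'.
Proof.
move=> [hr _] i j j' h1 h2; have /eqP/cards1P [z hz] := hr i.
have := hz; move/setP => hz'.
by move: (hz' j) (hz' j'); rewrite !inE h1 h2 => /esym/eqP -> /esym/eqP ->.
Qed.

Lemma monocol (R : realType) n (s : 'M[R[i]]_n) : monomial s ->
  forall i i' j, s i j != 0 -> s i' j != 0 -> i = i'.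
Proof.
move=> [_ hr] i i' j h1 h2; have /eqP/cards1P [z hz] := hr j.
have := hz; move/setP => hz'.
by move: (hz' i) (hz' i'); rewrite !inE h1 h2 => /esym/eqP -> /esym/eqP ->.
Qed.

Lemma monocolex (R : realType) n (s : 'M[R[i]]_n) : monomial s ->
  forall j, exists i, s i j != 0.
Proof.
move=> [_ hr] j; have /eqP/cards1P [z hz] := hr j.
by exists z; have /setP/(_ z) := hz; rewrite !inE eqxx.
Qed.


Lemma fw_common (R : realType) n (g s : 'M[R[i]]_n) :
  reflection s -> le_perp s g ->
  [/\ s \in unitmx, (\rank (s - 1%:M)%R <= 1)%N &
   exists v : 'cV_n, g *m v = s *m v /\ s *m v != v].
Proof.
move=> [[k [k0 hk]] [sne1 [H [rH HsubH]]]] hle.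
have su : s \in unitmx.
  case: k k0 hk => // k _ /= hk.
  by have [] := mulmx1_unit hk.
have rs1 : (\rank (s - 1%:M)%R <= 1)%N.
  have := mxrankS HsubH; rewrite rH /fixspace mxrank_ker mxrank_tr.
  have := rank_leq_row (s - 1%:M); lia.
have cs : (0 < codim s)%N.
  rewrite codimE lt0n mxrank_eq0 subr_eq0; exact: sne1.
pose h := invmx s *m g.
have gsh : g = s *m h by rewrite /h mulKVmx.
move: hle; rewrite /le_perp -/h => hle; clearbody h.
have : ~~ (fixspace h <= fixspace s)%MS.
  apply/negP => sub.
  have : (fixspace h <= fixspace g)%MS.
    move: sub; rewrite /fixspace !sub_kermx => /eqP e1.
    have /eqP e2 : (kermx (h - 1%:M)^T *m (h - 1%:M)^T == 0).
      by rewrite -sub_kermx submx_refl.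
    have -> : g - 1%:M = s *m (h - 1%:M) + (s - 1%:M).
      by rewrite mulmxBr mulmx1 -gsh addrA subrK.
    by rewrite [X in _ *m X]raddfD /= trmx_mul mulmxDr mulmxA e2 mul0mx e1 addr0.
  move/mxrankS; move: hle; rewrite /codim.
  have := rank_leq_row (fixspace h); have := rank_leq_row (fixspace g).
  move: cs; rewrite /codim; lia.
case/row_subPn => r0 hr0.
have hw : (row r0 (fixspace h) <= fixspace h)%MS by rewrite row_sub.
pose v := (row r0 (fixspace h))^T.
split => //; exists v; split.
  move: hw; rewrite /fixspace sub_kermx => /eqP/(congr1 trmx).
  rewrite trmx_mul trmxK trmx0 mulmxBl mul1mx => /eqP; rewrite subr_eq0 => /eqP hv.
  by rewrite gsh -mulmxA hv.
apply/negP => /eqP e; move: hr0; rewrite /fixspace sub_kermx.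
rewrite -(trmxK (row r0 _)) -trmx_mul -/v mulmxBl e mul1mx subrr trmx0 eqxx.
by [].
Qed.


Ltac simpeq := repeat match goal with
  | H : is_true (?a != ?b) |- context[?a == ?b] => rewrite (negbTE H)
  | H : is_true (?a != ?b) |- context[?b == ?a] => rewrite [b == a]eq_sym (negbTE H)
  end; rewrite ?eqxx /= ?mulr1n ?mulr0n.

Lemma backward (R : realType) (m p n : nat) (m0 : (0 < m)%N) (g : 'M[R[i]]_n)
  (goff : forall i j, i != j -> g i j = 0) c i j :
  i != j -> g i i = zeta R m ^ c -> g j j = zeta R m ^ (- c) ->
  (forall k, k != i -> k != j -> g k k = 1) -> codim g = 2%N ->
  exists s, inGmpn m p s /\ reflection s /\ le_perp s g.
Proof.
move=> ij gi gj goth cg2.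
have ji : j != i by rewrite eq_sym.
have gij : g i i * g j j = 1.
  by rewrite gi gj -exprzDr ?zeta_unit // addrN.
pose sg := tperm i j.
pose s : 'M[R[i]]_n := \matrix_(k, l) ((sg k == l)%:R).
have sE k l : s k l = (sg k == l)%:R by rewrite mxE.
have snz k l : (s k l != 0) = (sg k == l).
  by rewrite sE; case: (sg k == l); rewrite /= ?mulr1n ?mulr0n ?oner_eq0 ?eqxx.
have sgK : involutive sg by exact: tpermK.
have sing k l : l != sg k -> s k l = 0.
  by move=> h; rewrite sE eq_sym (negbTE h).
have ss : s *m s = 1%:M.
  apply/matrixP => k l; rewrite (mul_single _ _ (sing k)) !sE eqxx sgK mul1r mxE.
  by [].
have [su _] := mulmx1_unit ss.
have invs : invmx s = s.
  by rewrite -[invmx s]mulmx1 -ss mulmxA mulVmx // mul1mx.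
have gE k l : g k l = (k == l)%:R * g k k.
  case: eqVneq => [->|kl]; first by rewrite /= mulr1n mul1r.
  by rewrite /= mulr0n mul0r goff.
have rs1 : \rank (s - 1%:M) = 1%N.
  apply/eqP; rewrite eqn_leq; apply/andP; split.
    pose u k := ((k == j)%:R - (k == i)%:R : R[i]).
    pose w l := ((l == i)%:R - (l == j)%:R : R[i]).
    have -> : s - 1%:M = \matrix_(k, l) (u k * w l).
      apply/matrixP => k l; rewrite !mxE /u /w /sg.
      case: tpermP => [->|->|/eqP ki /eqP kj];
      (case: (eqVneq l i) => [eli|li]; [subst l|case: (eqVneq l j) => [elj|lj]; [subst l|]]);
      simpeq; ring.
    exact: rank_outer.
  rewrite lt0n mxrank_eq0; apply/eqP => /matrixP/(_ i i).
  rewrite !mxE /sg tpermL (negbTE ji) eqxx /= mulr0n mulr1n.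
  by move/eqP; rewrite subr_eq0 eq_sym oner_eq0.
exists s; split; [split; [split|]|split; [split; [|split]|]].
- split => [k|l].
    apply/eqP/cards1P; exists (sg k); apply/setP => l.
    by rewrite !inE snz eq_sym.
  apply/eqP/cards1P; exists (sg l); apply/setP => k.
  by rewrite !inE snz -{1}(sgK l) (inj_eq (can_inj sgK)).
- by move=> k l; rewrite snz sE => ->; rewrite expr1n.
- rewrite big1 ?expr1n // => k _; apply: big1 => l; rewrite snz sE => ->.
  by [].
- by exists 2%N; split => //=; rewrite mulmx1.
- apply/eqP => /matrixP/(_ i i); rewrite sE !mxE /sg tpermL (negbTE ji) eqxx /=.
  by move/eqP; rewrite eq_sym oner_eq0.
- exists (fixspace s); split => //.
  by rewrite /fixspace mxrank_ker mxrank_tr rs1 subn1.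
- have rsg1 : \rank (s *m g - 1%:M) = 1%N.
    apply/eqP; rewrite eqn_leq; apply/andP; split.
      pose u k := ((k == j)%:R * g i i - (k == i)%:R : R[i]).
      pose w l := ((l == i)%:R - (l == j)%:R * g j j : R[i]).
      have -> : s *m g - 1%:M = \matrix_(k, l) (u k * w l).
        apply/matrixP => k l; rewrite mxE (mul_single _ _ (sing k)) sE eqxx mul1r.
        rewrite gE !mxE /u /w /sg.
        case: tpermP => [->|->|/eqP ki /eqP kj];
        (case: (eqVneq l i) => [eli|li]; [subst l|case: (eqVneq l j) => [elj|lj]; [subst l|]]);
        simpeq; first [ring | rewrite !mul1r mul0r subr0 !sub0r mulrN gij // | rewrite goth //; ring].
      exact: rank_outer.
    rewrite lt0n mxrank_eq0; apply/eqP => /matrixP/(_ i i).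
    rewrite mxE (mul_single _ _ (sing i)) !mxE eqxx /= mulr1n mul1r /sg tpermL goff //.
    rewrite eqxx /= mulr1n.
    by move/eqP; rewrite sub0r oppr_eq0 oner_eq0.
  by rewrite /le_perp invs !codimE rs1 rsg1 -codimE cg2.
Qed.

Lemma forward (R : realType) (m p n : nat) : (0 < m)%N -> (0 < p)%N -> (p %| m)%N ->
  forall (g s : 'M[R[i]]_n) (c : 'I_n -> int),
  is_diag_mx g -> g != 1%:M -> (forall i, g i i = zeta R m ^ c i) ->
  (forall I : {set 'I_n}, I != set0 -> I \proper [set i | g i i != 1] ->
     ~~ (p%:Z %| \sum_(i in I) c i)%Z) ->
  ~ diag_reflection g -> inGmpn m p s -> reflection s -> le_perp s g ->
  (codim g = 2%N /\
      exists c : int, exists i j : 'I_n,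
        i != j /\ g i i = zeta R m ^ c /\ g j j = zeta R m ^ (- c) /\
        (forall k, k != i -> k != j -> g k k = 1)).
Proof.
move=> m0 p0 pm g s c gdiag gne1 hc hprop notdr Hs rs hle.
have goff : forall i j, i != j -> g i j = 0.
  by move/is_diag_mxP: gdiag => gd i j ij; apply: gd.
have goff' k : forall l, l != k -> g k l = 0 by move=> l lk; rewrite goff // eq_sym.
have gmul (v : 'cV_n) k : (g *m v) k 0 = g k k * v k 0 by rewrite (mul_single _ _ (goff' k)).
have gE k l : g k l = (k == l)%:R * g k k.
  case: eqVneq => [->|kl]; first by rewrite /= mulr1n mul1r.
  by rewrite /= mulr0n mul0r goff.
have gnz k : g k k != 0 by rewrite hc expfz_neq0 // zeta_neq0.
have [su rs1 [v [Hgv Hsv]]] := fw_common rs hle.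
have hmin := rank1_minor rs1.
have Ament k l : (s - 1%:M) k l = s k l - (k == l)%:R by rewrite !mxE.
have [k0 hk0] : exists k0, (s *m v) k0 0 != v k0 0.
  case: (boolP [exists k, (s *m v) k 0 != v k 0]) => [/existsP //|/existsPn H].
  exfalso; move/eqP: Hsv; apply; apply/matrixP => k j; rewrite (ord1 j).
  by apply/eqP; exact: negbNE (H k).
have Hgvk k : g k k * v k 0 = (s *m v) k 0 by rewrite -gmul Hgv.
have hdivm (z : int) : zeta R m ^ z = 1 -> (p%:Z %| z)%Z.
  by move/(zeta_eq1 m0) => h; apply: dvdz_trans h; rewrite dvdzE.
have [[mono ment] prods] := Hs.
case: (boolP [exists x, exists y, (x != y) && (s x y != 0)]) =>
   [/existsP [x /existsP [y /andP [xy sxy]]] | /existsPn nod].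
- have yx : y != x by rewrite eq_sym.
  have syy : s y y = 0.
    by apply/eqP; apply: contraNT xy => h; apply/eqP; apply: (monocol mono sxy h).
  have sky k : k != x -> s k y = 0.
    by move=> kx; apply/eqP; apply: contraNT kx => h; apply/eqP; apply: (monocol mono h sxy).
  have srow k l : k != x -> k != y -> s k l = (k == l)%:R.
    move=> kx ky; have := hmin y k y l; rewrite !Ament !sky //; simpeq.
    move/eqP; rewrite sub0r mulNr mul1r subr0 mulr0 oppr_eq0 subr_eq0 => /eqP.
    exact.
  have [r sr] := monocolex mono x.
  have ry : r = y.
    case: (eqVneq r x) => [erx|rx].
      by subst r; move: xy; rewrite (monorow mono sr sxy) eqxx.
    case: (eqVneq r y) => // ry; move: sr; rewrite srow //; simpeq.
    by [].
  subst r.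
  have sxx : s x x = 0.
    by apply/eqP; apply: contraNT xy => h; apply/eqP; apply: (monorow mono h sxy).
  have sxl l : l != y -> s x l = 0.
    by move=> ly; apply/eqP; apply: contraNT ly => h; apply/eqP; apply: (monorow mono h sxy).
  have syl l : l != x -> s y l = 0.
    by move=> lx; apply/eqP; apply: contraNT lx => h; apply/eqP; apply: (monorow mono h sr).
  have ab : s x y * s y x = 1.
    have := hmin x y y x; rewrite !Ament sxx syy; simpeq.
    by rewrite !subr0 => ->; rewrite sub0r mulrNN mulr1.
  have smx : (s *m v) x 0 = s x y * v y 0 by exact: mul_single.
  have smy : (s *m v) y 0 = s y x * v x 0 by exact: mul_single.
  have smk k : k != x -> k != y -> (s *m v) k 0 = v k 0.
    move=> kx ky; rewrite (@mul_single _ _ _ _ _ _ _ k) ?srow ?eqxx /= ?mulr1n ?mul1r //.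
    by move=> l lk; rewrite srow // eq_sym (negbTE lk).
  have E1 := Hgvk x; rewrite smx in E1.
  have E2 := Hgvk y; rewrite smy in E2.
  have hK : (s x y * v y 0 != v x 0) || (s y x * v x 0 != v y 0).
    case: (eqVneq k0 x) => [ekx|k0x]; first by subst k0; rewrite -smx hk0.
    case: (eqVneq k0 y) => [eky|k0y]; first by subst k0; rewrite -smy hk0 orbT.
    by move: hk0; rewrite smk // eqxx.
  have vx0 : v x 0 != 0.
    apply/eqP => vx; move: E2 hK; rewrite vx !mulr0 => /eqP; rewrite mulf_eq0 (negbTE (gnz y)) /=.
    by move=> /eqP ->; rewrite mulr0 !eqxx.
  have vy0 : v y 0 != 0.
    apply/eqP => vy; move: E1; rewrite vy mulr0 => /eqP; rewrite mulf_eq0 (negbTE (gnz x)) /=.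
    by rewrite (negbTE vx0).
  have gxy : g x x * g y y = 1.
    apply: (mulIf (mulf_neq0 vx0 vy0)); rewrite mul1r.
    have -> : g x x * g y y * (v x 0 * v y 0) = (g x x * v x 0) * (g y y * v y 0) by ring.
    rewrite E1 E2.
    have -> : s x y * v y 0 * (s y x * v x 0) = (s x y * s y x) * (v x 0 * v y 0) by ring.
    by rewrite ab mul1r.
  have gx1 : g x x != 1.
    apply/eqP => gx; have gy : g y y = 1 by move: gxy; rewrite gx mul1r.
    by move: hK; rewrite -E1 -E2 gx gy !mul1r !eqxx.
  have gy1 : g y y != 1.
    by apply/eqP => gy; move: gxy; rewrite gy mulr1 => /eqP; rewrite (negbTE gx1).
  have pcxy : (p%:Z %| c x + c y)%Z.
    by apply: hdivm; rewrite exprzDr ?zeta_unit // -!hc.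
  have gk1 k : k != x -> k != y -> g k k = 1.
    move=> kx ky; case: (eqVneq (g k k) 1) => // gk; exfalso.
    have ne0 : [set x; y] != set0 by apply/set0Pn; exists x; rewrite !inE eqxx.
    have pr : [set x; y] \proper [set i | g i i != 1].
      rewrite properE; apply/andP; split.
        by apply/subsetP => z; rewrite !inE => /orP [] /eqP ->.
      by apply/subsetPn; exists k; rewrite !inE ?gk // negb_or kx.
    by have := hprop _ ne0 pr; rewrite big_setU1 ?inE // big_set1 pcxy.
  split.
    rewrite codimE; apply/eqP; rewrite eqn_leq; apply/andP; split.
      have -> : g - 1%:M = \matrix_(k, l) (((k == x)%:R * (g x x - 1)) * (l == x)%:R)
                        + \matrix_(k, l) (((k == y)%:R * (g y y - 1)) * (l == y)%:R).
        apply/matrixP => k l; rewrite !mxE.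
        case: (eqVneq k x) => [ekx|kx]; [subst k|case: (eqVneq k y) => [eky|ky]; [subst k|]];
        (case: (eqVneq l x) => [elx|lx]; [subst l|case: (eqVneq l y) => [ely|ly]; [subst l|]]);
        simpeq; try first [ring | rewrite goff //; ring | rewrite goff' //; ring].
        case: (eqVneq k l) => [ekl|kl]; [subst l; rewrite gk1 //|rewrite goff //]; simpeq; ring.
      by apply: leq_trans (mxrank_add _ _) _; rewrite (leq_add (rank_outer _ _) (rank_outer _ _)).
    apply: (@rank2_minor _ _ _ _ x y x y).
    rewrite !mxE (goff _ _ xy) (goff _ _ yx); simpeq.
    by rewrite !subr0 mulr0 mulf_neq0 // subr_eq0.
  exists (c x), x, y; split => //; split; first exact: hc.
  split => //.
  apply: (mulfI (gnz x)); rewrite gxy hc -exprzDr ?zeta_unit // addrN.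
  by [].
- have sdiag x y : x != y -> s x y = 0.
    move=> xy; move: (nod x) => /existsPn /(_ y); rewrite xy /= negbK.
    by move/eqP.
  have [i si1] : exists i, s i i != 1.
    case: (boolP [exists i, s i i != 1]) => [/existsP //|/existsPn H].
    exfalso; have [_ [sne1 _]] := rs; move/eqP: sne1; apply.
    apply/matrixP => x y; rewrite mxE.
    case: (eqVneq x y) => [exy|xy]; last by rewrite sdiag.
    by subst y; move: (H x) => /negbNE/eqP ->.
  have sk1 k : k != i -> s k k = 1.
    move=> ki; have ik : i != k by rewrite eq_sym.
    have := hmin i k i k; rewrite !Ament (sdiag _ _ ki) (sdiag _ _ ik).
    simpeq; rewrite subr0 mulr0 => /eqP; rewrite mulf_eq0 subr_eq0 (negbTE si1) /=.
    by rewrite subr_eq0 => /eqP.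
  have si0 : s i i != 0.
    have [r sr] := monocolex mono i; case: (eqVneq r i) => [eri|ri].
      by subst r.
    by move: sr; rewrite sdiag ?eqxx.
  have snz x y : (s x y != 0) = (y == x).
    case: (eqVneq y x) => [->|yx]; last by rewrite sdiag ?eqxx // eq_sym.
    case: (eqVneq x i) => [->|xi] //; by rewrite sk1 // oner_eq0.
  have prod : \prod_(x < n) \prod_(y < n | s x y != 0) s x y = s i i.
    rewrite (eq_bigr (fun x => s x x)); last first.
      by move=> x _; rewrite (big_pred1 x) // => y; rewrite /= snz.
    by rewrite (bigD1 i) //= big1 ?mulr1 // => k ki; exact: sk1.
  have a_pow : s i i ^+ (m %/ p) = 1 by rewrite -prod.
  have smul k : (s *m v) k 0 = s k k * v k 0.
    by apply: mul_single => l lk; rewrite sdiag // eq_sym.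
  have k0i : k0 = i.
    case: (eqVneq k0 i) => // k0i; exfalso; move: hk0.
    by rewrite smul sk1 // mul1r eqxx.
  subst k0.
  have vi0 : v i 0 != 0.
    by apply/eqP => vi; move: hk0; rewrite smul vi mulr0 eqxx.
  have gi : g i i = s i i by apply: (mulIf vi0); rewrite Hgvk smul.
  have q0 : (0 < m %/ p)%N by rewrite divn_gt0 // dvdn_leq.
  have pci : (p%:Z %| c i)%Z.
    have : ((m : int) %| c i * (m %/ p)%:Z)%Z.
      apply: (@zeta_eq1 R _ m0); rewrite -exprz_exp -hc gi; exact: a_pow.
    have -> : (m : int) = (p : int) * (m %/ p)%N by rewrite -PoszM mulnC divnK.
    rewrite dvdz_mul2r //.
    lia.
  have gk1 k : k != i -> g k k = 1.
    move=> ki; case: (eqVneq (g k k) 1) => // gk; exfalso.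
    have ne0 : [set i] != set0 by apply/set0Pn; exists i; rewrite !inE eqxx.
    have pr : [set i] \proper [set i | g i i != 1].
      rewrite properE sub1set !inE gi si1 /=.
      by apply/subsetPn; exists k; rewrite !inE ?gk.
    by have := hprop _ ne0 pr; rewrite big_set1 pci.
  exfalso; apply: notdr; split => //; split; [|split => //].
    exists m; split => //.
    have iterE k : iter k (mulmx g) 1%:M = \matrix_(x, y) ((x == y)%:R * g x x ^+ k).
      elim: k => [|k IH].
        by apply/matrixP => x y; rewrite !mxE expr0 mulr1.
      apply/matrixP => x y; rewrite /= IH (mul_single _ _ (goff' x)) !mxE exprS.
      by case: (x == y); rewrite /= ?mulr1n ?mulr0n; ring.
    rewrite iterE; apply/matrixP => x y; rewrite !mxE.
    have -> : g x x ^+ m = 1.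
      have e : (zeta R m ^ c x) ^ (m : int) = 1.
        rewrite exprzAC.
        have -> : zeta R m ^ (m : int) = 1 by exact: zeta_m.
        by rewrite exp1rz.
      by rewrite hc; exact: e.
    by rewrite mulr1.
  exists (fixspace g); split => //.
  rewrite /fixspace mxrank_ker mxrank_tr.
  have -> : \rank (g - 1%:M) = 1%N.
    apply/eqP; rewrite eqn_leq; apply/andP; split.
      have -> : g - 1%:M = \matrix_(x, y) (((x == i)%:R * (g i i - 1)) * (y == i)%:R).
        apply/matrixP => x y; rewrite !mxE.
        case: (eqVneq x i) => [exi|xi]; [subst x|];
        (case: (eqVneq y i) => [eyi|yi]; [subst y|]);
        simpeq; try first [ring | rewrite goff //; ring | rewrite goff' //; ring].
        case: (eqVneq x y) => [exy|xy]; [subst y; rewrite gk1 //|rewrite goff //]; simpeq; ring.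
      exact: rank_outer.
    by rewrite lt0n mxrank_eq0 subr_eq0.
  by rewrite subn1.
Qed.

Local Open Scope complex_scope.

Theorem mainTheorem6 (R : realType) (m p n : nat) :
  (0 < m)%N -> (0 < p)%N -> (0 < n)%N -> (p %| m)%N ->
  forall g : 'M[R[i]]_n,
    inGmpn m p g -> p_connected m p g -> ~ diag_reflection g ->
    ((exists s : 'M[R[i]]_n, inGmpn m p s /\ reflection s /\ le_perp s g)
     <->
     (codim g = 2%N /\
      exists c : int, exists i j : 'I_n,
        i != j /\ g i i = zeta R m ^ c /\ g j j = zeta R m ^ (- c) /\
        (forall k, k != i -> k != j -> g k k = 1))).
Proof.
move=> m0 p0 n0 pm g Hg [gdiag [gne1 [c [hc /= [hdiv hprop]]]]] notdr; split.
  move=> [s [Hs [rs hle]]].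
  exact: (@forward R m p n m0 p0 pm g s c gdiag gne1 hc hprop notdr Hs rs hle).
move=> [cg2 [c0 [i [j [ij [gi [gj goth]]]]]]].
have goff : forall i j, i != j -> g i j = 0.
  by move/is_diag_mxP: gdiag => gd i' j' ij'; apply: gd.
exact: (@backward R m p n m0 g goff c0 i j ij gi gj goth cg2).
Qed.
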